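(* Let $IS\in\{\Box,\blacksquare\}^2$ and let $\tau$ be a correct compositional translation from $\mathrm{SYNCSIMPLE}$ into $\mathrm{LOCKSIMPLE}_{2,IS}$ of blocking type $(P_1P_1,P_2P_2)$. Then $\tau(!)$ does not start with $P_1$.
   Context: $\mathrm{SYNCSIMPLE}$: subprocesses $\mathcal{U} ::= \checkmark \mid 0 \mid\, !\mathcal{U} \mid\, ?\mathcal{U}$; processes are finite parallel compositions ($\mid$ associative, commutative, $0$ a unit). Reduction: $!\mathcal{U}_1\mid ?\mathcal{U}_2\mid \mathcal{P}\to \mathcal{U}_1\mid\mathcal{U}_2\mid\mathcal{P}$. Successful: of form $\checkmark\mid\mathcal{P}$; may-convergent: reduces to a successful process; must-convergent: every reachable process is may-convergent. $\mathrm{LOCKSIMPLE}_{k,IS}$ ($IS\in\{\Box,\blacksquare\}^k$, $\Box$ empty, $\blacksquare$ full): subprocesses are words over $\{P_1,T_1,\dots,P_k,T_k\}$ followed by $0$ or $\checkmark$; states $(\mathcal{P},C)$ reduce by $(P_i\mathcal{U}\mid\mathcal{P},C)\to(\mathcal{U}\mid\mathcal{P},C[C_i:=\blacksquare])$ only if $C_i=\Box$, and $(T_i\mathcal{U}\mid\mathcal{P},C)\to(\mathcal{U}\mid\mathcal{P},C[C_i:=\Box])$ always. Success = process contains $\checkmark$; a process $\mathcal{P}$ is may/must-convergent iff the state $(\mathcal{P},IS)$ is. A compositional translation $\tau$ is given by words $\tau(!),\tau(?)$ with $\tau(0)=0$, $\tau(\checkmark)=\checkmark$, $\tau(!\mathcal{U})=\tau(!)\tau(\mathcal{U})$,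 $\tau(?\mathcal{U})=\tau(?)\tau(\mathcal{U})$, $\tau$ commuting with $\mid$; correct = preserves and reflects may- and must-convergence. Blocking type of a word $S$: execute $S$ alone from $IS$; if it gets stuck at an occurrence of $P_i$ that is the first symbol from $\{P_i,T_i\}$ in $S$ the type is $P_i$, if stuck at a later occurrence of $P_i$ the type is $P_iP_i$; $\tau$ has blocking type $(W_1,W_2)$ if $\tau(!)$ has type $W_1$ and $\tau(?)$ type $W_2$. *)

(* Defs.v *)
From Stdlib Require List.
From Stdlib Require Import Permutation.
From mathcomp Require Import all_boot.

Set Implicit Arguments.
Unset Strict Implicit.
Unset Printing Implicit Defensive.

Inductive ssub : Type :=
  | SCheck : ssub
  | SZero  : ssub
  | SSend  : ssub -> ssub
  | SRecv  : ssub -> ssub.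

(* processes: finite parallel compositions, as lists up to permutation *)
Definition sproc := seq ssub.

Definition sstep (P Q : sproc) : Prop :=
  exists u1 u2 R, Permutation P (SSend u1 :: SRecv u2 :: R) /\ Q = u1 :: u2 :: R.

Inductive star (A : Type) (r : A -> A -> Prop) : A -> A -> Prop :=
  | star_refl x : star r x x
  | star_step x y z : r x y -> star r y z -> star r x z.

Definition ssuccessful (P : sproc) : Prop := List.In SCheck P.
Definition smay (P : sproc) : Prop := exists Q, star sstep P Q /\ ssuccessful Q.
Definition smust (P : sproc) : Prop := forall Q, star sstep P Q -> smay Q.

(* a symbol is (true, i) = P_i or (false, i) = T_i; lock indices are 'I_k,
   so the paper's P_1, P_2 are LP ord0, LP ord_max for k = 2. *)
Definition lsym (k : nat) := (bool * 'I_k)%type.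
Definition LP k (i : 'I_k) : lsym k := (true, i).
Definition LT k (i : 'I_k) : lsym k := (false, i).

(* a subprocess: a word followed by 0 (false) or checkmark (true) *)
Definition lsub (k : nat) := (seq (lsym k) * bool)%type.
Definition lproc (k : nat) := seq (lsub k).
(* lock contents: true = full (blacksquare), false = empty (box) *)
Definition lockst (k : nat) := {ffun 'I_k -> bool}.
Definition lstate (k : nat) := (lproc k * lockst k)%type.

Definition upd k (C : lockst k) (i : 'I_k) (b : bool) : lockst k :=
  [ffun j => if j == i then b else C j].

Definition lstep k (S S' : lstate k) : Prop :=
  (exists i w e R, Permutation S.1 ((LP i :: w, e) :: R) /\ S.2 i = false /\
      S' = ((w, e) :: R, upd S.2 i true))
  \/
  (exists i w e R, Permutation S.1 ((LT i :: w, e) :: R) /\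
      S' = ((w, e) :: R, upd S.2 i false)).

Definition lsuccessful k (S : lstate k) : Prop := List.In ([::], true) S.1.
Definition lmay k (S : lstate k) : Prop :=
  exists S', star (@lstep k) S S' /\ lsuccessful S'.
Definition lmust k (S : lstate k) : Prop :=
  forall S', star (@lstep k) S S' -> lmay S'.

(* tau is determined by the words ts = tau(!) and tr = tau(?) *)
Fixpoint tr_sub k (ts tr : seq (lsym k)) (u : ssub) : lsub k :=
  match u with
  | SCheck => ([::], true)
  | SZero => ([::], false)
  | SSend u' => let p := tr_sub ts tr u' in (ts ++ p.1, p.2)
  | SRecv u' => let p := tr_sub ts tr u' in (tr ++ p.1, p.2)
  end.

Definition tr_proc k (ts tr : seq (lsym k)) (P : sproc) : lproc k :=
  map (tr_sub ts tr) P.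

Definition correct_translation k (IS : lockst k) (ts tr : seq (lsym k)) : Prop :=
  forall P : sproc,
    (smay P <-> lmay (tr_proc ts tr P, IS)) /\
    (smust P <-> lmust (tr_proc ts tr P, IS)).

Inductive btype (k : nat) : Type :=
  | BNone                   (* the word does not get stuck *)
  | BFirst of 'I_k          (* type P_i  *)
  | BLater of 'I_k.         (* type P_iP_i *)

(* execute the word alone; [pre] is the already executed prefix *)
Fixpoint btype_aux k (pre : seq (lsym k)) (w : seq (lsym k)) (C : lockst k)
  : btype k :=
  match w with
  | [::] => BNone k
  | s :: w' =>
      if s.1 then
        if C s.2 then
          (if has (fun t : lsym k => t.2 == s.2) pre then BLater s.2
           else BFirst s.2)
        else btype_aux (rcons pre s) w' (upd C s.2 true)
      else btype_aux (rcons pre s) w' (upd C s.2 false)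
  end.

Definition blocking_type k (IS : lockst k) (w : seq (lsym k)) : btype k :=
  btype_aux [::] w IS.

(* Main.v *)
Require Import Defs.
From mathcomp Require Import all_boot.
From Stdlib Require Import Permutation.
From Stdlib Require List.
From mathcomp Require Import zify.

Set Implicit Arguments.
Unset Strict Implicit.
Unset Printing Implicit Defensive.

Fixpoint exec k (w : seq (lsym k)) (C : lockst k) : option (lockst k) :=
  match w with
  | [::] => Some C
  | s :: w' => if s.1 then (if C s.2 then None else exec w' (upd C s.2 true))
               else exec w' (upd C s.2 false)
  end.

Lemma exec_cat k (a b : seq (lsym k)) C :
  exec (a ++ b) C = match exec a C with Some C' => exec b C' | None => None end.
Proof.
elim: a C => [|[[] i] a IH] C //=.
- by case: (C i).
Qed.

Lemma btype_later k pre (w : seq (lsym k)) C i :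
  btype_aux pre w C = BLater i ->
  exists u v C', w = u ++ LP i :: v /\ exec u C = Some C' /\ C' i = true.
Proof.
elim: w pre C => [|[b j] w IH] pre C //=.
case: b => /=.
- case HC: (C j).
  + case: ifP => // _ [<-]. by exists [::], w, C.
  + move=> /IH [u [v [C' [-> [He Hi]]]]].
    exists ((true, j) :: u), v, C'; split => //=. by rewrite HC.
- move=> /IH [u [v [C' [-> [He Hi]]]]].
  by exists ((false, j) :: u), v, C'.
Qed.

Lemma greedy k (w : seq (lsym k)) C : exists w1 w2 C',
  w = w1 ++ w2 /\ exec w1 C = Some C' /\
  (w2 = [::] \/ exists j w3, w2 = LP j :: w3 /\ C' j = true).
Proof.
elim: w C => [|[b j] w IH] C.
- exists [::], [::], C; split => //; split => //; by left.
- case: b.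
  + case HC: (C j).
    * exists [::], ((true, j) :: w), C; split => //; split => //.
      right; by exists j, w.
    * have [w1 [w2 [C' [-> [He Hs]]]]] := IH (upd C j true).
      exists ((true, j) :: w1), w2, C'; split => //; split => //=.
      by rewrite HC.
  + have [w1 [w2 [C' [-> [He Hs]]]]] := IH (upd C j false).
    by exists ((false, j) :: w1), w2, C'.
Qed.

Lemma exec_mono k (w : seq (lsym k)) (C D D' : lockst k) :
  (forall i, C i -> D i) -> exec w D = Some D' ->
  exists C', exec w C = Some C' /\ (forall i, C' i -> D' i).
Proof.
elim: w C D => [|[b j] w IH] C D Hle /=.
- move=> [<-]; by exists C.
- case: b => /=.
  + case HD: (D j) => //.
    have HC : C j = false.
    { case HC: (C j) => //. by move: (Hle j); rewrite HC HD => /(_ isT). }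
    rewrite HC; apply: IH => i; rewrite !ffunE; case: (i == j) => //; exact: Hle.
  + apply: IH => i; rewrite !ffunE; case: (i == j) => //; exact: Hle.
Qed.

Lemma exec_indep k (w : seq (lsym k)) (C D C' D' : lockst k) i :
  C i = D i -> exec w C = Some C' -> exec w D = Some D' -> C' i = D' i.
Proof.
elim: w C D => [|[b j] w IH] C D Hi /=.
- by move=> [<-] [<-].
- case: b => /=.
  + case: (C j) => //; case: (D j) => //.
    apply: IH; rewrite !ffunE; by case: (i == j).
  + apply: IH; rewrite !ffunE; by case: (i == j).
Qed.

Lemma star_trans A (r : A -> A -> Prop) x y z : star r x y -> star r y z -> star r x z.
Proof.
elim=> [//|a b c Hab _ IH] Hz; apply: star_step Hab (IH Hz).
Qed.

Definition reach k (S T : lstate k) :=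
  exists T', star (@lstep k) S T' /\ Permutation T'.1 T.1 /\ T'.2 = T.2.

Lemma lstep_perm k (P Q : lproc k) C X :
  Permutation P Q -> lstep (Q, C) X -> lstep (P, C) X.
Proof.
move=> Hpq [[i [w [e [R [Hp [HC HX]]]]]]|[i [w [e [R [Hp HX]]]]]].
- left; exists i, w, e, R; split => //; exact: Permutation_trans Hpq Hp.
- right; exists i, w, e, R; split => //; exact: Permutation_trans Hpq Hp.
Qed.

Lemma star_perm k (P Q : lproc k) C U :
  Permutation P Q -> star (@lstep k) (Q, C) U ->
  exists U', star (@lstep k) (P, C) U' /\ Permutation U'.1 U.1 /\ U'.2 = U.2.
Proof.
move=> Hpq Hs; inversion Hs; subst.
- exists (P, C); split; [exact: star_refl | by split].
- exists U; split; [|by split].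
  apply: star_step H0; exact: lstep_perm Hpq H.
Qed.

Lemma reach_trans k (S T U : lstate k) : reach S T -> reach T U -> reach S U.
Proof.
case: T => TL TC [T' [H1 [H2 H3]]] [U' [H4 [H5 H6]]].
case: T' H1 H2 H3 => T1 T2 H1 /= H2 H3; subst T2.
have [U'' [H7 [H8 H9]]] := star_perm H2 H4.
exists U''; split; first exact: star_trans H1 H7.
split; [exact: Permutation_trans H8 H5 | by rewrite H9].
Qed.

Lemma reach_perm k (L1 L2 : lproc k) C T :
  Permutation L1 L2 -> reach (L2, C) T -> reach (L1, C) T.
Proof.
move=> Hp [T' [H1 [H2 H3]]].
have [U [H4 [H5 H6]]] := star_perm Hp H1.
exists U; split => //; split; [exact: Permutation_trans H5 H2 | by rewrite H6].
Qed.

Lemma run_star k (w1 w2 : seq (lsym k)) e R C C' :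
  exec w1 C = Some C' ->
  star (@lstep k) (((w1 ++ w2, e) :: R), C) (((w2, e) :: R), C').
Proof.
elim: w1 C => [|[b j] w1 IH] C /=.
- move=> [<-]; exact: star_refl.
- case: b => /=.
  + case HC: (C j) => // He.
    apply: star_step (IH _ He); left; exists j, (w1 ++ w2), e, R.
    split; first exact: Permutation_refl.
    by split.
  + move=> He; apply: star_step (IH _ He); right; exists j, (w1 ++ w2), e, R.
    split; first exact: Permutation_refl.
    by [].
Qed.

Lemma reach_run k (L : lproc k) w w1 w2 e R C C' :
  Permutation L ((w, e) :: R) -> w = w1 ++ w2 -> exec w1 C = Some C' ->
  reach (L, C) (((w2, e) :: R), C').
Proof.
move=> Hp Hw He; subst w.
have [U [H1 [H2 H3]]] := star_perm Hp (run_star w2 e R He).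
by exists U.
Qed.

Lemma perm_in_head A (L R : list A) x : Permutation L (x :: R) -> List.In x L.
Proof.
move=> Hp; have := Permutation_in x (Permutation_sym Hp); apply; by left.
Qed.

Lemma perm_in A (L L' : list A) x : Permutation L L' -> List.In x L -> List.In x L'.
Proof. move=> Hp; exact: (Permutation_in x Hp). Qed.

Definition blocked k (C : lockst k) (x : lsub k) :=
  (x.1 = [::] /\ x.2 = false) \/ exists i w, x.1 = LP i :: w /\ C i = true.

Lemma terminal_nomay k (L : lproc k) C :
  (forall x, List.In x L -> blocked C x) -> ~ lmay (L, C).
Proof.
move=> Hb [S' [Hs Hsucc]].
inversion Hs; subst.
- case: (Hb _ Hsucc) => /=; first by case.
  by move=> [i [w [H _]]].
- case: H => [[i [w [e [R [/= Hp [HC _]]]]]]|[i [w [e [R [/= Hp _]]]]]].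
  + have Hin : List.In (LP i :: w, e) L.
    { exact: perm_in_head Hp. }
    case: (Hb _ Hin) => /=; first by case.
    move=> [j [w' [[Hij _] Hj]]]. by rewrite Hij Hj in HC.
  + have Hin : List.In (LT i :: w, e) L.
    { exact: perm_in_head Hp. }
    case: (Hb _ Hin) => /=; first by case.
    by move=> [j [w' [H _]]].
Qed.

Lemma must_contra k (S T : lstate k) :
  lmust S -> reach S T -> (forall x, List.In x T.1 -> blocked T.2 x) -> False.
Proof.
move=> Hm [T' [H1 [H2 H3]]] Hb.
have := Hm _ H1; case: T' H1 H2 H3 => L C H1 /= H2 H3.
apply: terminal_nomay => x Hx; rewrite H3; apply: Hb; exact: perm_in H2 Hx.
Qed.

Definition isR (u : ssub) : bool := if u is SRecv _ then true else false.

Lemma perm_count (f : ssub -> bool) l1 l2 : Permutation l1 l2 -> count f l1 = count f l2.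
Proof.
elim=> //= [x l l' _ IH|x y l|l l' l'' _ IH1 _ IH2]; first by rewrite IH.
- by rewrite addnCA.
- by rewrite IH1.
Qed.

Lemma nostep P : count isR P = 0 -> forall Q, ~ sstep P Q.
Proof.
move=> H0 Q [u1 [u2 [R [Hp _]]]].
by move: (perm_count isR Hp); rewrite H0.
Qed.

Lemma smust_one P :
  count isR P = 1 -> (exists Q, sstep P Q) ->
  (forall u1 u2 R, Permutation P (SSend u1 :: SRecv u2 :: R) ->
     isR u1 = false /\ isR u2 = false /\ (u1 = SCheck \/ u2 = SCheck)) ->
  smust P.
Proof.
move=> H1 [Q0 HQ0] Hu.
have after : forall Q, sstep P Q -> List.In SCheck Q /\ count isR Q = 0.
{ move=> Q [u1 [u2 [R [Hp ->]]]].
  have [Hr1 [Hr2 Hc]] := Hu _ _ _ Hp.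
  split; first by case: Hc => ->; [left|right; left].
  move: (perm_count isR Hp); rewrite H1 /= Hr1 Hr2 /=.
  by move=> [<-]. }
move=> Q Hs.
have gen : forall X Y, star sstep X Y -> X = P -> smay Y.
{ move=> X Y; elim=> [x Hx|x y z Hxy Hyz _ Hx]; subst x.
  - have [Hc _] := after _ HQ0.
    exists Q0; split => //; apply: star_step HQ0 (star_refl _ _).
  - have [Hc Hz] := after _ Hxy.
    case: Hyz Hz Hc => [y' Hz Hc|a b c Hab _ Hz].
    + by exists y'; split => //; exact: star_refl.
    + by case: (nostep Hz Hab). }
exact: gen Hs erefl.
Qed.

Lemma In_nseq A (x y : A) n : List.In x (nseq n y) -> x = y.
Proof. elim: n => //= n IH [->|/IH] //. Qed.

Lemma ord2_cases (j : 'I_2) : j = ord0 \/ j = ord_max.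
Proof.
case: j => [[|[|n]] Hj].
- left; exact: val_inj.
- right; exact: val_inj.
- by [].
Qed.

Theorem lemma5p6 (IS : lockst 2) (ts tr : seq (lsym 2)) :
  correct_translation IS ts tr ->
  blocking_type IS ts = BLater (ord0 : 'I_2) ->
  blocking_type IS tr = BLater (ord_max : 'I_2) ->
  forall w, ts <> LP (ord0 : 'I_2) :: w.
Proof.
move=> Hcor Hbs Hbr w Hts.
have IS0 : IS ord0 = false.
{ move: Hbs; rewrite Hts /blocking_type /=. by case: (IS ord0). }
have [u [v [Cu [Hu [Heu HCu]]]]] := btype_later Hbs.
have [p [q [Cp [Hp [Hep HCp]]]]] := btype_later Hbr.
have HM2 : lmust ([:: (ts, false); (tr, true)], IS).
{ have := (Hcor [:: SSend SZero; SRecv SCheck]).2.1.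
  rewrite /tr_proc /= !cats0; apply; apply: smust_one.
  - done.
  - exists [:: SZero; SCheck]; exists SZero, SCheck, [::]; split => //.
  - move=> u1 u2 R Hpm.
    have h1 : List.In (SSend u1) [:: SSend SZero; SRecv SCheck].
    { apply: (perm_in (Permutation_sym Hpm)); by left. }
    have h2 : List.In (SRecv u2) [:: SSend SZero; SRecv SCheck].
    { apply: (perm_in (Permutation_sym Hpm)); by right; left. }
    case: h1 => [[<-]|[//|//]].
    case: h2 => [//|[[<-]|//]].
    by split => //; split => //; right. }
have R1 : reach ([:: (ts, false); (tr, true)], IS)
                ([:: (LP ord_max :: q, true); (ts, false)], Cp).
{ exact: (reach_run (w := tr) (w1 := p) (Permutation.perm_swap _ _ _) Hp Hep). }
have Cp0 : Cp ord0 = false.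
{ case H: (Cp ord0) => //; exfalso.
  apply: (must_contra HM2 R1) => /= x [<-|[<-|//]]; right.
  - by exists ord_max, q.
  - by exists ord0, w; rewrite Hts. }
have Hup : exists D, exec u Cp = Some D.
{ have [u1 [u2 [D [Hu12 [He1 Hst]]]]] := greedy u Cp.
  case: Hst => [Hu2|[j [u3 [Hu2 HDj]]]].
  - by exists D; rewrite Hu12 Hu2 cats0.
  - exfalso.
    move: Heu; rewrite Hu12 Hu2 exec_cat.
    case HE: (exec u1 IS) => [E|//] /=.
    case HEj: (E j) => // _.
    have Hind := exec_indep (i := ord0) _ He1 HE.
    rewrite Cp0 IS0 in Hind; have {}Hind := Hind erefl.
    have Hj : j = ord_max.
    { case: (ord2_cases j) => // Hj0; subst j. by rewrite Hind HEj in HDj. }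
    subst j.
    have R2 : reach ([:: (LP ord_max :: q, true); (ts, false)], Cp)
         ([:: (LP ord_max :: u3 ++ LP ord0 :: v, false); (LP ord_max :: q, true)], D).
    { apply: (reach_run (w := ts) (w1 := u1) (Permutation.perm_swap _ _ _) _ He1).
      by rewrite Hu Hu12 Hu2 -catA. }
    apply: (must_contra HM2 (reach_trans R1 R2)) => /= x [<-|[<-|//]]; right.
    + by exists ord_max, (u3 ++ LP ord0 :: v).
    + by exists ord_max, q. }
have Fu : forall C : lockst 2, C ord0 = false ->
          exists C'', exec u C = Some C'' /\ C'' ord0 = true.
{ move=> C HC0; case: Hup => D HD.
  have Hle : forall i, C i -> Cp i.
  { move=> i Hi; case: (ord2_cases i) => Hi'; subst i; first by rewrite HC0 in Hi.
    exact: HCp. }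
  have [C'' [HC'' _]] := exec_mono Hle HD.
  exists C''; split => //.
  rewrite -HCu; apply: exec_indep HC'' Heu; by rewrite HC0 IS0. }
pose vP := (LP (ord0 : 'I_2) :: v : seq (lsym 2)).
have Kind : forall N (r : seq (lsym 2)) m k (C : lockst 2),
  size r <= N -> size r < m -> C ord0 = true ->
  exists T, reach (((r, false) :: nseq m (ts, true) ++ nseq k (vP, true)), C) T /\
            (forall x, List.In x T.1 -> blocked T.2 x).
{ have termi : forall (r : seq (lsym 2)) m k (C : lockst 2), C ord0 = true ->
     (r = [::] \/ exists j r3, r = LP j :: r3 /\ C j = true) ->
     forall x, List.In x (((r, false) :: nseq m (ts, true) ++ nseq k (vP, true)), C).1 ->
       blocked (((r, false) :: nseq m (ts, true) ++ nseq k (vP, true)), C).2 x.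
  { move=> r m k C HC Hst x /= [<-|].
    - case: Hst => [->|[j [r3 [-> Hj]]]]; [by left|right; by exists j, r3].
    - move=> Hx0; have [Hx|Hx] := List.in_app_or _ _ _ Hx0; right.
      + rewrite (In_nseq Hx); by exists ord0, w; rewrite Hts.
      + rewrite (In_nseq Hx); by exists ord0, v. }
  elim=> [|N IH] r m k C HN Hm HC.
  - have Hr0 : r = [::] by move: HN; rewrite leqn0 size_eq0 => /eqP.
    exists (((r, false) :: nseq m (ts, true) ++ nseq k (vP, true)), C); split.
    + exists (((r, false) :: nseq m (ts, true) ++ nseq k (vP, true)), C).
      split; [exact: star_refl | split => //; exact: Permutation_refl].
    + apply: termi => //; by left.
  - have [r1 [r2 [C' [Hr [Her Hst]]]]] := greedy r C.
    have R3 := reach_run (L := ((r, false) :: nseq m (ts, true) ++ nseq k (vP, true)))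
                 (Permutation_refl _) Hr Her.
    case HC'0: (C' ord0).
    + eexists; split; first exact: R3.
      exact: termi.
    + have Hr1 : r1 <> [::].
      { move=> Hr1; subst r1; move: Her => [Hc]; by rewrite -Hc HC in HC'0. }
      have Hs2 : size r2 <= N.
      { move: HN; rewrite Hr size_cat; case: r1 Hr1 {Hr Her} => //= a r1 _; lia. }
      have Hs2' : size r2 < size r.
      { rewrite Hr size_cat; case: r1 Hr1 {Hr Her} => //= a r1 _; lia. }
      case: m Hm R3 => [//|m'] Hm R3.
      have [C'' [HeC'' HC''0]] := Fu C' HC'0.
      have R4 : reach (((r2, false) :: nseq m'.+1 (ts, true) ++ nseq k (vP, true)), C')
                      (((vP, true) :: (r2, false) :: nseq m' (ts, true) ++ nseq k (vP, true)), C'').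
      { exact: (reach_run (w := ts) (w1 := u) (Permutation.perm_swap _ _ _) Hu HeC''). }
      have [T [R5 HT]] := IH r2 m' k.+1 C'' Hs2 (leq_trans Hs2' (Hm : size r < m'.+1)) HC''0.
      exists T; split => //.
      apply: reach_trans R3 (reach_trans R4 (reach_perm _ R5)).
      apply: Permutation_trans (Permutation.perm_swap _ _ _) _.
      apply: Permutation.perm_skip.
      exact: Permutation_middle. }
have HK : lmust (((tr, false) :: nseq (size tr).+2 (ts, true)), IS).
{ have := (Hcor (SRecv SZero :: nseq (size tr).+2 (SSend SCheck))).2.1.
  rewrite /tr_proc /= map_nseq /= !cats0; apply; apply: smust_one.
  - by rewrite /= count_nseq.
  - exists [:: SCheck, SZero & nseq (size tr).+1 (SSend SCheck)].
    exists SCheck, SZero, (nseq (size tr).+1 (SSend SCheck)); split => //.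
    exact: Permutation.perm_swap.
  - move=> u1 u2 R Hpm.
    have h1 : List.In (SSend u1) (SRecv SZero :: nseq (size tr).+2 (SSend SCheck)).
    { apply: (perm_in (Permutation_sym Hpm)); by left. }
    have h2 : List.In (SRecv u2) (SRecv SZero :: nseq (size tr).+2 (SSend SCheck)).
    { apply: (perm_in (Permutation_sym Hpm)); by right; left. }
    have [//|Hx] : SRecv SZero = SSend u1 \/ List.In (SSend u1) (nseq (size tr).+2 (SSend SCheck)) := h1.
    move: (In_nseq Hx) => [->].
    have [[<-]|Hx'] : SRecv SZero = SRecv u2 \/ List.In (SRecv u2) (nseq (size tr).+2 (SSend SCheck)) := h2; last by move: (In_nseq Hx').
    by split => //; split => //; left. }
have R0 : reach (((tr, false) :: nseq (size tr).+2 (ts, true)), IS)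
                (((vP, true) :: (tr, false) :: nseq (size tr).+1 (ts, true)), Cu).
{ exact: (reach_run (w := ts) (w1 := u) (Permutation.perm_swap _ _ _) Hu Heu). }
have [T [RT HT]] := Kind (size tr) tr (size tr).+1 1 Cu (leqnn _) (ltnSn _) HCu.
apply: (must_contra HK (reach_trans R0 (reach_perm _ RT)) HT).
apply: Permutation_trans (Permutation.perm_swap _ _ _) _.
apply: Permutation.perm_skip.
exact: Permutation_cons_append.
Qed.
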